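(* Let $C$ be an ordered field and let $\mathbb{M}$ be a model of $T_{\mathrm{Ham}}$ with underlying set $G_\infty$. Then there are (1) a definable subset $H\subseteq G$ which is $C$-linearly independent and dense in $(G,<_0)$, and (2) a definable subset $S\subsetneq G$ which is the underlying set of an elementary substructure of the ordered $C$-vector space $(G;+,<_0,(\lambda_c)_{c\in C})$.
   Context: Let $C$ be an ordered field. A Hamel space over $C$ is a $C$-vector space $G$ with two total orderings $<_0,<_1$, each making $G$ an ordered $C$-vector space, and a map $v:G\to G_\infty=G\cup\{\infty\}$ ($G<_0\infty$, $G<_1\infty$) such that for all $x,y\in G$, $\lambda\in C^{\times}$: $v(x)=\infty$ iff $x=0$; $v(x+y)\ge_0\min_0(v(x),v(y))$; $v(\lambda x)=v(x)$; $0<_1x<_1y\Rightarrow v(x)\ge_0v(y)$; $v(v(x))=v(x)$ (with $v(\infty)=\infty$); $v(x)>_10$. It is independent if for all $a_0<_0b_0$, $a_1<_1b_1$ in $G\cup\{\pm\infty\}$ some $z\in G$ has $a_0<_0z<_0b_0$, $a_1<_1z<_1b_1$; dense if for all $a<_0b$ in $G$ some $c$ has $a<_0v(c)<_0b$. $T_{\mathrm{Ham}}$ is the theory in the language $\{0,+,(\lambda_c)_{c\in C},<_0,<_1,v,\infty\}$ on universe $G_\infty$ (with $\infty$ absorbing for $+$, $\lambda_c$, $v$) whose models are exactly the independent dense Hamel spaces over $C$; ''definable'' refers to this language. $\lambda_c$ denotes scalar multiplication by $c$. *)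

(* Defs.v *)
From HB Require Import structures.
From mathcomp Require Import all_boot all_order all_algebra.
Set Implicit Arguments. Unset Strict Implicit. Unset Printing Implicit Defensive.
Import Order.TTheory GRing.Theory Num.Theory.
Local Open Scope ring_scope.

Section Hamel.
Variable C : realFieldType.
Variable G : lmodType C.

(** Extended universe G_oo = G ∪ {oo}, encoded as [option G], [None] = oo. *)
Definition ext_lt (lt : G -> G -> Prop) (a b : option G) : Prop :=
  match a, b with
  | Some x, Some y => lt x y
  | Some _, None => True
  | None, _ => False
  end.
Definition ext_le (lt : G -> G -> Prop) (a b : option G) : Prop :=
  ext_lt lt a b \/ a = b.

Definition ordered_vs (lt : G -> G -> Prop) : Prop :=
  [/\ (forall x, ~ lt x x),
      (forall x y z, lt x y -> lt y z -> lt x z),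
      (forall x y, x <> y -> lt x y \/ lt y x),
      (forall x y z, lt x y -> lt (x + z) (y + z)) &
      (forall (c : C) x, 0 < c -> lt 0 x -> lt 0 (c *: x))].

Definition ext_v (v : G -> option G) (a : option G) : option G :=
  match a with Some x => v x | None => None end.

Definition hamel_space (lt0 lt1 : G -> G -> Prop) (v : G -> option G) : Prop :=
  [/\ ordered_vs lt0, ordered_vs lt1,
      (forall x, v x = None <-> x = 0),
      (forall x y, ext_le lt0 (v x) (v (x + y)) \/ ext_le lt0 (v y) (v (x + y))) &
      (forall (c : C) x, c != 0 -> v (c *: x) = v x)] /\
  [/\ (forall x y, lt1 0 x -> lt1 x y -> ext_le lt0 (v y) (v x)),
      (forall x, ext_v v (v x) = v x) &
      (forall x, ext_lt lt1 (Some 0) (v x))].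

(** Bounds in G ∪ {-oo,+oo}: a lower bound [None] means -oo, an upper bound
    [None] means +oo. *)
Definition lb_lt (lt : G -> G -> Prop) (a : option G) (z : G) : Prop :=
  if a is Some x then lt x z else True.
Definition ub_lt (lt : G -> G -> Prop) (z : G) (b : option G) : Prop :=
  if b is Some y then lt z y else True.
Definition bnd_lt (lt : G -> G -> Prop) (a b : option G) : Prop :=
  match a, b with Some x, Some y => lt x y | _, _ => True end.

Definition independent (lt0 lt1 : G -> G -> Prop) : Prop :=
  forall a0 b0 a1 b1 : option G,
    bnd_lt lt0 a0 b0 -> bnd_lt lt1 a1 b1 ->
    exists z, [/\ lb_lt lt0 a0 z, ub_lt lt0 z b0, lb_lt lt1 a1 z & ub_lt lt1 z b1].

Definition dense_val (lt0 : G -> G -> Prop) (v : G -> option G) : Prop :=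
  forall a b, lt0 a b -> exists c, ext_lt lt0 (Some a) (v c) /\ ext_lt lt0 (v c) (Some b).

Definition ham_model (lt0 lt1 : G -> G -> Prop) (v : G -> option G) : Prop :=
  [/\ hamel_space lt0 lt1 v, independent lt0 lt1 & dense_val lt0 v].

Inductive hterm : Type :=
| HVar of nat | HZero | HInf | HAdd of hterm & hterm
| HScal of C & hterm | HVal of hterm.

Inductive hform : Type :=
| HEq of hterm & hterm | HLt0 of hterm & hterm | HLt1 of hterm & hterm
| HNot of hform | HAnd of hform & hform | HEx of nat & hform.

Definition upd {T} (e : nat -> T) (n : nat) (x : T) : nat -> T :=
  fun m => if m == n then x else e m.

Fixpoint heval (v : G -> option G) (e : nat -> option G) (t : hterm) : option G :=
  match t with
  | HVar n => e n
  | HZero => Some 0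
  | HInf => None
  | HAdd s u =>
      match heval v e s, heval v e u with
      | Some x, Some y => Some (x + y) | _, _ => None end
  | HScal c s => if heval v e s is Some x then Some (c *: x) else None
  | HVal s => ext_v v (heval v e s)
  end.

Fixpoint hsat (lt0 lt1 : G -> G -> Prop) (v : G -> option G)
    (e : nat -> option G) (f : hform) : Prop :=
  match f with
  | HEq s u => heval v e s = heval v e u
  | HLt0 s u => ext_lt lt0 (heval v e s) (heval v e u)
  | HLt1 s u => ext_lt lt1 (heval v e s) (heval v e u)
  | HNot g => ~ hsat lt0 lt1 v e g
  | HAnd g h => hsat lt0 lt1 v e g /\ hsat lt0 lt1 v e h
  | HEx n g => exists x : option G, hsat lt0 lt1 v (upd e n x) g
  end.

(** Definable (with parameters) subsets of the universe G_oo: the formula's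
    variable 0 is the free variable, the other variables are parameters. *)
Definition ham_definable (lt0 lt1 : G -> G -> Prop) (v : G -> option G)
    (X : option G -> Prop) : Prop :=
  exists (f : hform) (p : nat -> option G),
    forall a : option G, X a <-> hsat lt0 lt1 v (upd p 0 a) f.

Definition in_G (S : G -> Prop) (a : option G) : Prop :=
  if a is Some x then S x else False.

Definition lin_indep (H : G -> Prop) : Prop :=
  forall (s : seq G) (c : 'I_(size s) -> C),
    uniq s -> (forall x, x \in s -> H x) ->
    \sum_(i < size s) c i *: s`_i = 0 -> forall i, c i = 0.

Definition dense_in (lt : G -> G -> Prop) (H : G -> Prop) : Prop :=
  forall a b, lt a b -> exists h, [/\ H h, lt a h & lt h b].

(** Language {0,+,<_0,(λ_c)} of ordered C-vector spaces (reduct), with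
    satisfaction relative to a domain D ⊆ G (quantifiers range over D). *)
Inductive vterm : Type :=
| VVar of nat | VZero | VAdd of vterm & vterm | VScal of C & vterm.

Inductive vform : Type :=
| VEq of vterm & vterm | VLt of vterm & vterm
| VNot of vform | VAnd of vform & vform | VEx of nat & vform.

Fixpoint veval (e : nat -> G) (t : vterm) : G :=
  match t with
  | VVar n => e n
  | VZero => 0
  | VAdd s u => veval e s + veval e u
  | VScal c s => c *: veval e s
  end.

Fixpoint vsat (lt : G -> G -> Prop) (D : G -> Prop) (e : nat -> G) (f : vform) : Prop :=
  match f with
  | VEq s u => veval e s = veval e u
  | VLt s u => lt (veval e s) (veval e u)
  | VNot g => ~ vsat lt D e g
  | VAnd g h => vsat lt D e g /\ vsat lt D e h
  | VEx n g => exists x, D x /\ vsat lt D (upd e n x) g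
  end.

Definition elem_substructure (lt : G -> G -> Prop) (S : G -> Prop) : Prop :=
  [/\ S 0,
      (forall x y, S x -> S y -> S (x + y)),
      (forall (c : C) x, S x -> S (c *: x)) &
      (forall (f : vform) (e : nat -> G), (forall n, S (e n)) ->
         (vsat lt S e f <-> vsat lt (fun _ => True) e f))].

End Hamel.

(* Main.v *)
Require Import Defs.
From mathcomp Require Import all_boot all_order all_algebra.
From Stdlib Require Import Classical.
From Stdlib Require List.
Set Implicit Arguments. Unset Strict Implicit. Unset Printing Implicit Defensive.
Import Order.TTheory GRing.Theory Num.Theory.
Local Open Scope ring_scope.

Section Ord.
Variable C : realFieldType.
Variable G : lmodType C.
Variable lt : G -> G -> Prop.
Hypothesis Hlt : ordered_vs lt.

Let P (a : G) := lt 0 a.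

Lemma lt_irr x : ~ lt x x. Proof. by move: Hlt => [h _ _ _ _]; apply: h. Qed.
Lemma lt_trans x y z : lt x y -> lt y z -> lt x z. Proof. by move: Hlt => [_ h _ _ _]; apply: h. Qed.
Lemma lt_tot x y : x <> y -> lt x y \/ lt y x. Proof. by move: Hlt => [_ _ h _ _]; apply: h. Qed.
Lemma lt_add x y z : lt x y -> lt (x + z) (y + z). Proof. by move: Hlt => [_ _ _ h _]; apply: h. Qed.
Lemma lt_scal (c : C) x : 0 < c -> lt 0 x -> lt 0 (c *: x). Proof. by move: Hlt => [_ _ _ _ h]; apply: h. Qed.

Lemma lt_sub x y : lt x y <-> lt 0 (y - x).
Proof.
split=> h.
  by have := lt_add (- x) h; rewrite subrr.
by have := lt_add x h; rewrite add0r subrK.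
Qed.

Lemma P_add a b : lt 0 a -> lt 0 b -> lt 0 (a + b).
Proof. move=> ha hb; apply: lt_trans hb _; have := lt_add b ha; by rewrite add0r. Qed.

Lemma P_tri a : a = 0 \/ lt 0 a \/ lt 0 (- a).
Proof.
case: (classic (a = 0)) => [->|h]; first by left.
right; case: (lt_tot h) => h'; last by left.
by right; move/lt_sub: h'; rewrite sub0r.
Qed.

Lemma P_asym a : lt 0 a -> lt 0 (- a) -> False.
Proof. move=> h1 h2; have := P_add h1 h2; rewrite subrr; exact: lt_irr. Qed.

Lemma P_scal_pos (c : C) a : 0 < c -> (lt 0 (c *: a) <-> lt 0 a).
Proof.
move=> hc; split; last exact: lt_scal.
move=> h; case: (P_tri a) => [a0|[//|h']].
  by move: h; rewrite a0 scaler0 => /lt_irr.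
by exfalso; apply: (P_asym h); rewrite -scalerN; apply: lt_scal.
Qed.

Definition same (a b : G) := (lt 0 a <-> lt 0 b) /\ (lt 0 (- a) <-> lt 0 (- b)).

Lemma same_scale (c : C) a b : same a b -> same (c *: a) (c *: b).
Proof.
move=> [h1 h2]; case: (ltgtP c 0) => hc.
- have hc' : 0 < - c by rewrite oppr_gt0.
  have E (x : G) : c *: x = (- c) *: (- x) by rewrite scaleNr scalerN opprK.
  have E' (x : G) : - (c *: x) = (- c) *: x by rewrite scaleNr.
  split.
    by rewrite (E a) (E b) !P_scal_pos.
  by rewrite (E' a) (E' b) !P_scal_pos.
- split; first by rewrite !P_scal_pos.
  by rewrite -!scalerN !P_scal_pos.
- by rewrite hc !scale0r; split.
Qed.

Lemma same_eq0 a b : same a b -> (a = 0 <-> b = 0).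
Proof.
move=> [h1 h2].
have key x : x = 0 <-> ~ lt 0 x /\ ~ lt 0 (- x).
  split; first by move=> ->; rewrite oppr0; split; apply: lt_irr.
  by move=> [n1 n2]; case: (P_tri x) => [//|[]].
by rewrite !key h1 h2.
Qed.


Lemma lt_asym x y : lt x y -> lt y x -> False.
Proof. move=> h1 h2; exact: (lt_irr (lt_trans h1 h2)). Qed.

Lemma same_of x y r : (lt r x <-> lt r y) -> (lt x r <-> lt y r) -> same (x - r) (y - r).
Proof.
move=> h1 h2; split; first by rewrite -!lt_sub.
by rewrite !opprB -!lt_sub.
Qed.

Lemma half_double (a : G) : 2^-1 *: (a + a) = a.
Proof. by rewrite -mulr2n -scaler_nat scalerA mulVf ?pnatr_eq0 // scale1r. Qed.

Lemma mid_lt a b : lt a b -> lt a (2^-1 *: (a + b)) /\ lt (2^-1 *: (a + b)) b.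
Proof.
move=> h; move/lt_sub: (h) => h'.
have h2 : (0:C) < 2^-1 by rewrite invr_gt0 ltr0n.
have E1 : 2^-1 *: (a + b) - a = 2^-1 *: (b - a).
  by rewrite -{2}(half_double a) -scalerBr opprD addrACA subrr add0r.
have E2 : b - 2^-1 *: (a + b) = 2^-1 *: (b - a).
  by rewrite -{1}(half_double b) -scalerBr opprD addrACA subrr addr0.
split; apply/lt_sub; [rewrite E1 | rewrite E2]; exact: lt_scal.
Qed.


Fixpoint coef n (t : vterm C) : C :=
  match t with
  | VVar m => if m == n then 1 else 0
  | VZero => 0
  | VAdd s u => coef n s + coef n u
  | VScal c s => c * coef n s
  end.

Fixpoint rest n (t : vterm C) : vterm C :=
  match t with
  | VVar m => if m == n then VZero C else VVar C m
  | VZero => VZero C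
  | VAdd s u => VAdd (rest n s) (rest n u)
  | VScal c s => VScal c (rest n s)
  end.

Fixpoint tsubst n (u t : vterm C) : vterm C :=
  match t with
  | VVar m => if m == n then u else VVar C m
  | VZero => VZero C
  | VAdd s w => VAdd (tsubst n u s) (tsubst n u w)
  | VScal c s => VScal c (tsubst n u s)
  end.

Lemma upd_same (e : nat -> G) n x : upd e n x n = x.
Proof. by rewrite /upd eqxx. Qed.

Lemma lin (e : nat -> G) n t : veval e t = coef n t *: e n + veval e (rest n t).
Proof.
elim: t => [m||s IHs u IHu|c s IHs] /=.
- by case: eqP => [<-|_] /=; rewrite ?scale1r ?addr0 ?scale0r ?add0r.
- by rewrite scale0r addr0.
- by rewrite IHs IHu scalerDl addrACA.
- by rewrite IHs scalerDr scalerA.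
Qed.

Lemma rest_ind (e : nat -> G) n x t : veval (upd e n x) (rest n t) = veval e (rest n t).
Proof.
elim: t => [m||s IHs u IHu|c s IHs] /=.
- by case: eqP => [<-|/eqP h] //=; rewrite /upd (negbTE h).
- by [].
- by rewrite IHs IHu.
- by rewrite IHs.
Qed.

Lemma tsubst_ok (e : nat -> G) n u t : veval e (tsubst n u t) = veval (upd e n (veval e u)) t.
Proof.
elim: t => [m||s IHs w IHw|c s IHs] /=.
- by rewrite /upd; case: eqP.
- by [].
- by rewrite IHs IHw.
- by rewrite IHs.
Qed.

Definition dco n (s t : vterm C) : C := coef n s - coef n t.
Definition kt n (s t : vterm C) : vterm C := VAdd (rest n s) (VScal (-1) (rest n t)).
Definition root n (s t : vterm C) : vterm C := VScal (- (dco n s t)^-1) (kt n s t).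

Lemma diff_gen (e : nat -> G) n s t :
  veval e s - veval e t = dco n s t *: e n + veval e (kt n s t).
Proof.
rewrite (lin e n s) (lin e n t) /dco /kt /= scaleN1r scalerBl.
by rewrite opprD addrACA.
Qed.

Lemma kt_ind (e : nat -> G) n x s t : veval (upd e n x) (kt n s t) = veval e (kt n s t).
Proof. by rewrite /kt /= !rest_ind. Qed.

Lemma diff_upd (e : nat -> G) n x s t :
  veval (upd e n x) s - veval (upd e n x) t = dco n s t *: x + veval e (kt n s t).
Proof. by rewrite (diff_gen _ n) upd_same kt_ind. Qed.

Lemma diff_root (e : nat -> G) n x s t : dco n s t != 0 ->
  dco n s t *: x + veval e (kt n s t) = dco n s t *: (x - veval e (root n s t)).
Proof.
move=> hd; rewrite /root /= scalerBr scalerA mulrN mulfV // scaleN1r.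
by rewrite /kt /= scaleN1r opprK.
Qed.


Fixpoint qf (f : vform C) : bool :=
  match f with
  | VEq _ _ | VLt _ _ => true
  | VNot g => qf g
  | VAnd g h => qf g && qf h
  | VEx _ _ => false
  end.

Fixpoint fsubst n (u : vterm C) (f : vform C) : vform C :=
  match f with
  | VEq s t => VEq (tsubst n u s) (tsubst n u t)
  | VLt s t => VLt (tsubst n u s) (tsubst n u t)
  | VNot g => VNot (fsubst n u g)
  | VAnd g h => VAnd (fsubst n u g) (fsubst n u h)
  | VEx m g => VEx m g
  end.

Fixpoint roots n (f : vform C) : list (vterm C) :=
  match f with
  | VEq s t | VLt s t => if dco n s t != 0 then (root n s t :: nil) else nil
  | VNot g => roots n g
  | VAnd g h => List.app (roots n g) (roots n h)
  | VEx _ _ => nil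
  end.

Definition vtrue : vform C := VEq (VZero C) (VZero C).
Definition vfalse : vform C := VNot vtrue.
Definition vor (a b : vform C) : vform C := VNot (VAnd (VNot a) (VNot b)).

Fixpoint inf n (b : bool) (f : vform C) : vform C :=
  match f with
  | VEq s t => if dco n s t == 0 then VEq s t else vfalse
  | VLt s t => if dco n s t == 0 then VLt s t
               else if (if b then dco n s t < 0 else 0 < dco n s t) then vtrue else vfalse
  | VNot g => VNot (inf n b g)
  | VAnd g h => VAnd (inf n b g) (inf n b h)
  | VEx m g => VEx m g
  end.

Fixpoint bigor (l : list (vform C)) : vform C :=
  match l with nil => vfalse | f :: l => vor f (bigor l) end.

Definition mid (r1 r2 : vterm C) : vterm C := VScal 2^-1 (VAdd r1 r2).

Definition elim n (f : vform C) : vform C :=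
  vor (inf n false f) (vor (inf n true f)
     (bigor (List.flat_map (fun r1 => List.map (fun r2 => fsubst n (mid r1 r2) f) (roots n f))
                           (roots n f)))).

Fixpoint qe (f : vform C) : vform C :=
  match f with
  | VEq s t => VEq s t
  | VLt s t => VLt s t
  | VNot g => VNot (qe g)
  | VAnd g h => VAnd (qe g) (qe h)
  | VEx n g => elim n (qe g)
  end.

Lemma qf_inf n b f : qf f -> qf (inf n b f).
Proof.
elim: f => [s t|s t|g IH|g IHg h IHh|m g IH] //=.
- by case: (dco n s t == 0).
- by case: (dco n s t == 0) => //; case: ifP.
- by move/andP=> [/IHg -> /IHh ->].
Qed.

Lemma qf_fsubst n u f : qf f -> qf (fsubst n u f).
Proof.
elim: f => [s t|s t|g IH|g IHg h IHh|m g IH] //=.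
by move/andP=> [/IHg -> /IHh ->].
Qed.

Lemma qf_bigor l : (forall f, List.In f l -> qf f) -> qf (bigor l).
Proof.
elim: l => [|f l IH] //= H; rewrite H /=; last by left.
by apply: IH => g hg; apply: H; right.
Qed.

Lemma qf_elim n f : qf f -> qf (elim n f).
Proof.
move=> hf; rewrite /elim /vor /= !qf_inf //=; apply: qf_bigor => g.
move/List.in_flat_map => [r1 [_ /List.in_map_iff [r2 [<- _]]]].
exact: qf_fsubst.
Qed.

Lemma qf_qe f : qf (qe f).
Proof.
elim: f => [s t|s t|g IH|g IHg h IHh|m g IH] //=; first by rewrite IHg IHh.
exact: qf_elim.
Qed.


Lemma sat_lt D e (s t : vterm C) :
  vsat lt D e (VLt s t) <-> lt 0 (- (veval e s - veval e t)).
Proof. by rewrite /= opprB -lt_sub. Qed.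

Lemma sat_eq D e (s t : vterm C) :
  vsat lt D e (VEq s t) <-> veval e s - veval e t = 0.
Proof. by rewrite /=; split=> [->|/eqP]; [rewrite subrr | rewrite subr_eq0 => /eqP]. Qed.

Lemma sat_true D e : vsat lt D e vtrue. Proof. by []. Qed.
Lemma sat_false D e : ~ vsat lt D e vfalse. Proof. by rewrite /=. Qed.

Lemma sat_or D e a b : vsat lt D e (vor a b) <-> vsat lt D e a \/ vsat lt D e b.
Proof.
rewrite /=; split.
  by move=> h; apply: NNPP => h'; apply: h; split => ?; apply: h'; [left|right].
by case=> h [h1 h2].
Qed.

Lemma sat_bigor D e l : vsat lt D e (bigor l) <-> exists f, List.In f l /\ vsat lt D e f.
Proof.
elim: l => [|f l IH].
  by rewrite /=; split => [[]|[f [[]]]].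
change (vsat lt D e (vor f (bigor l)) <-> exists g, List.In g (f :: l) /\ vsat lt D e g).
rewrite sat_or IH; split.
  by case=> [h|[g [hg h]]]; [exists f; split => //; left | exists g; split => //; right].
by case=> g [[<-|hg] h]; [left | right; exists g].
Qed.

Lemma fsubst_ok D e n u f : qf f ->
  (vsat lt D e (fsubst n u f) <-> vsat lt D (upd e n (veval e u)) f).
Proof.
elim: f => [s t|s t|g IH|g IHg h IHh|m g IH] //=.
- by rewrite !tsubst_ok.
- by rewrite !tsubst_ok.
- by move/IH => ->.
- by move/andP => [/IHg -> /IHh ->].
Qed.

Lemma same_atom_lt a b : same a b -> (lt 0 (- a) <-> lt 0 (- b)).
Proof. by case. Qed.

Lemma inv_roots D e n f x y : qf f ->
  (forall r, List.In r (roots n f) -> same (x - veval e r) (y - veval e r)) ->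
  (vsat lt D (upd e n x) f <-> vsat lt D (upd e n y) f).
Proof.
elim: f => [s t|s t|g IH|g IHg h IHh|m g IH] hq H; last by [].
- rewrite !(sat_eq D) !diff_upd; case: (eqVneq (dco n s t) 0) => hd.
    by rewrite hd !scale0r !add0r.
  rewrite !diff_root //; apply: same_eq0; apply: same_scale; apply: H.
  by rewrite /= hd; left.
- rewrite !(sat_lt D) !diff_upd; case: (eqVneq (dco n s t) 0) => hd.
    by rewrite hd !scale0r !add0r.
  rewrite !diff_root //; apply: same_atom_lt; apply: same_scale; apply: H.
  by rewrite /= hd; left.
- by rewrite /= (IH hq H).
- move/andP: hq => [hg hh].
  rewrite /= (IHg hg) ?(IHh hh) // => r hr; apply: H; apply: List.in_or_app; by [right|left].
Qed.

Lemma sign_prod (c : C) w : lt 0 w -> (lt 0 (c *: w) <-> 0 < c).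
Proof.
move=> hw; case: (ltgtP c 0) => hc.
- split => // h; exfalso; apply: (P_asym h).
  by rewrite -scaleNr; apply: lt_scal; rewrite ?oppr_gt0.
- by split => // _; apply: lt_scal.
- by rewrite hc scale0r; split => // /lt_irr.
Qed.

Lemma sat_if D e (c : bool) : vsat lt D e (if c then vtrue else vfalse) <-> c.
Proof. by case: c => /=; split => // h; apply: h. Qed.

Lemma inf_ok D e n f x (b : bool) : qf f ->
  (forall r, List.In r (roots n f) ->
     lt 0 (if b then x - veval e r else - (x - veval e r))) ->
  (vsat lt D e (inf n b f) <-> vsat lt D (upd e n x) f).
Proof.
elim: f => [s t|s t|g IH|g IHg h IHh|m g IH] hq H; last by [].
- rewrite /inf -/inf; case: (eqVneq (dco n s t) 0) => hd.
    by rewrite ?eqxx !(sat_eq D) (diff_gen _ n) diff_upd hd !scale0r !add0r.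
  rewrite ?(negbTE hd) (sat_eq D) diff_upd diff_root //.
  have := H (root n s t); rewrite /= hd => /(_ (or_introl erefl)).
  move=> hw; split => // /eqP; rewrite scaler_eq0 (negbTE hd) /= => /eqP w0.
  by clear H; move: hw; rewrite w0 oppr0; case: b => /lt_irr.
- rewrite /inf -/inf; case: (eqVneq (dco n s t) 0) => hd.
    by rewrite ?eqxx !(sat_lt D) (diff_gen _ n) diff_upd hd !scale0r !add0r.
  rewrite ?(negbTE hd) (sat_lt D) diff_upd diff_root // sat_if.
  have := H (root n s t); rewrite /= hd => /(_ (or_introl erefl)).
  clear H; case: b => hw.
    by rewrite -scaleNr sign_prod // oppr_gt0.
  by rewrite -scalerN sign_prod.
- by rewrite /= (IH hq H).
- move/andP: hq => [hg hh].
  rewrite /= (IHg hg) ?(IHh hh) // => r hr; apply: H; apply: List.in_or_app; by [right|left].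
Qed.


Lemma ex_max (T : Type) (f : T -> G) (r : G -> G -> Prop)
  (rtr : forall a b c, r a b -> r b c -> r a c)
  (rtot : forall a b, a <> b -> r a b \/ r b a) (l : list T) x :
  (forall t, List.In t l -> ~ r (f t) x) \/
  exists t1, [/\ List.In t1 l, r (f t1) x &
     forall t, List.In t l -> r (f t) x -> f t = f t1 \/ r (f t) (f t1)].
Proof.
elim: l => [|a l IH]; first by left.
case: (classic (r (f a) x)) => ha.
  case: IH => [IH|[t1 [i1 h1 m1]]].
    right; exists a; split => //; first by left.
    by move=> t [<-|ht] htx; [left | exfalso; exact: (IH t ht)].
  case: (classic (f a = f t1)) => e1.
    right; exists t1; split => //; first by right.
    by move=> t [<-|ht] htx; [left | apply: m1].
  case: (rtot _ _ e1) => e2.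
    right; exists t1; split => //; first by right.
    by move=> t [<-|ht] htx; [right | apply: m1].
  right; exists a; split => //; first by left.
  move=> t [<-|ht] htx; first by left.
  by right; case: (m1 t ht htx) => [->|h]; [|apply: rtr _ _ _ h e2].
case: IH => [IH|[t1 [i1 h1 m1]]].
  by left => t [<-|ht] //; apply: IH.
right; exists t1; split => //; first by right.
by move=> t [<-|ht] htx; [exfalso; exact: ha|apply: m1].
Qed.

Lemma Dveval (D : G -> Prop) (D0 : D 0) (DD : forall a b, D a -> D b -> D (a + b))
  (DS : forall (c : C) a, D a -> D (c *: a)) e :
  (forall m, D (e m)) -> forall t, D (veval e t).
Proof. by move=> He; elim => //= *; auto. Qed.

Lemma below (T : Type) (f : T -> G) (D : G -> Prop) (D0 : D 0)
  (DD : forall a b, D a -> D b -> D (a + b)) (DS : forall (c : C) a, D a -> D (c *: a))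
  p (Dp : D p) (hp : lt 0 p) (l : list T) :
  (forall t, List.In t l -> D (f t)) ->
  exists x, D x /\ forall t, List.In t l -> lt x (f t).
Proof.
elim: l => [|a l IH] H; first by exists 0.
case: IH => [t ht|x' [Dx' hx']]; first by apply: H; right.
have hlt : lt (f a - p) (f a).
  by apply/lt_sub; rewrite opprB addrC subrK.
case: (classic (lt x' (f a))) => hxa.
  by exists x'; split => // t [<-|ht]; last apply: hx'.
exists (f a - p); split.
  by apply: DD; [apply: H; left | rewrite -scaleN1r; apply: DS].
move=> t [<-|ht] //.
apply: lt_trans hlt _.
case: (classic (f a = x')) => [->|ne]; first exact: hx'.
case: (lt_tot ne) => h; last by [].
by apply: lt_trans h (hx' t ht).
Qed.

Lemma above (T : Type) (f : T -> G) (D : G -> Prop) (D0 : D 0)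
  (DD : forall a b, D a -> D b -> D (a + b)) (DS : forall (c : C) a, D a -> D (c *: a))
  p (Dp : D p) (hp : lt 0 p) (l : list T) :
  (forall t, List.In t l -> D (f t)) ->
  exists x, D x /\ forall t, List.In t l -> lt (f t) x.
Proof.
move=> H.
have H' : forall t, List.In t l -> D (- f t).
  by move=> t ht; rewrite -scaleN1r; apply: DS; apply: H.
have [x [Dx hx]] := @below T (fun t => - f t) D D0 DD DS p Dp hp l H'.
exists (- x); split; first by rewrite -scaleN1r; apply: DS.
move=> t ht; move/lt_sub: (hx t ht) => h.
by apply/lt_sub; rewrite addrC.
Qed.


Lemma in_mids n f r1 r2 : List.In r1 (roots n f) -> List.In r2 (roots n f) ->
  List.In (fsubst n (mid r1 r2) f)
    (List.flat_map (fun r1 => List.map (fun r2 => fsubst n (mid r1 r2) f) (roots n f))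
       (roots n f)).
Proof.
move=> h1 h2; apply/List.in_flat_map; exists r1; split => //.
by apply/List.in_map_iff; exists r2.
Qed.

Lemma elim_ok (D : G -> Prop) (D0 : D 0)
  (DD : forall a b, D a -> D b -> D (a + b)) (DS : forall (c : C) a, D a -> D (c *: a))
  p (Dp : D p) (p0 : p <> 0) e (He : forall m, D (e m)) n f : qf f ->
  ((exists x, D x /\ vsat lt D (upd e n x) f) <-> vsat lt D e (elim n f)).
Proof.
move=> hq.
have [q [Dq hq0]] : exists q, D q /\ lt 0 q.
  case: (P_tri p) => [//|[h|h]]; first by exists p.
  by exists (- p); split => //; rewrite -scaleN1r; apply: DS.
have DR : forall r, List.In r (roots n f) -> D (veval e r).
  by move=> r _; apply: Dveval.
rewrite /elim !sat_or sat_bigor; split.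
- move=> [x [Dx hx]].
  case: (classic (exists r, List.In r (roots n f) /\ veval e r = x)).
    move=> [r [hr er]]; right; right; exists (fsubst n (mid r r) f).
    split; first exact: in_mids.
    by rewrite fsubst_ok //= er half_double.
  move=> hne.
  have ne r : List.In r (roots n f) -> veval e r <> x.
    by move=> hr er; apply: hne; exists r.
  have [Mn|[r1 [i1 h1 m1]]] := ex_max (veval e) lt_trans lt_tot (roots n f) x.
    left; rewrite (@inf_ok D e n f x false) // => r hr.
    rewrite opprB; apply: (proj1 (lt_sub _ _)).
    case: (lt_tot (ne r hr)) => h; [exfalso; exact: (Mn r hr h) | exact: h].
  have [Mx|[r2 [i2 h2 m2]]] := ex_max (veval e) (r := fun a b => lt b a)
      (fun a b c h h' => lt_trans h' h)
      (fun a b h => proj1 (or_comm _ _) (lt_tot h)) (roots n f) x.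
    right; left; rewrite (@inf_ok D e n f x true) // => r hr.
    apply: (proj1 (lt_sub _ _)).
    case: (lt_tot (ne r hr)) => h; [exact: h | exfalso; exact: (Mx r hr h)].
  right; right; exists (fsubst n (mid r1 r2) f); split; first exact: in_mids.
  rewrite fsubst_ok //=.
  have [hm1 hm2] := mid_lt (lt_trans h1 h2).
  set m := 2^-1 *: _ in hm1 hm2 *.
  rewrite -(@inv_roots D e n f x m) // => r hr.
  apply: same_of.
  + case: (lt_tot (ne r hr)) => h.
      have hr1 : lt (veval e r) m.
        by case: (m1 r hr h) => [->|h']; [|apply: lt_trans h' hm1].
      by split.
    have hr2 : lt m (veval e r).
      by case: (m2 r hr h) => [->|h']; [|apply: lt_trans hm2 h'].
    split => h4; exfalso; [exact: lt_asym h h4 | exact: lt_asym hr2 h4].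
  + case: (lt_tot (ne r hr)) => h.
      have hr1 : lt (veval e r) m.
        by case: (m1 r hr h) => [->|h']; [|apply: lt_trans h' hm1].
      split => h4; exfalso; [exact: lt_asym h h4 | exact: lt_asym hr1 h4].
    have hr2 : lt m (veval e r).
      by case: (m2 r hr h) => [->|h']; [|apply: lt_trans hm2 h'].
    by split.
- case=> [h|[h|[g [hg hs]]]].
  + have [x [Dx hx]] := @below _ (veval e) D D0 DD DS q Dq hq0 _ DR.
    exists x; split => //; rewrite -(@inf_ok D e n f x false) // => r hr.
    by rewrite opprB; apply: (proj1 (lt_sub _ _)); apply: hx.
  + have [x [Dx hx]] := @above _ (veval e) D D0 DD DS q Dq hq0 _ DR.
    exists x; split => //; rewrite -(@inf_ok D e n f x true) // => r hr.
    by apply: (proj1 (lt_sub _ _)); apply: hx.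
  + move/List.in_flat_map: hg => [r1 [_ /List.in_map_iff [r2 [eg _]]]].
    move: hs; rewrite -eg fsubst_ok // => hs.
    by exists (veval e (mid r1 r2)); split => //; apply: Dveval.
Qed.


Lemma qe_ok (D : G -> Prop) (D0 : D 0)
  (DD : forall a b, D a -> D b -> D (a + b)) (DS : forall (c : C) a, D a -> D (c *: a))
  p (Dp : D p) (p0 : p <> 0) f :
  forall e, (forall m, D (e m)) -> (vsat lt D e f <-> vsat lt D e (qe f)).
Proof.
elim: f => [s t|s t|g IH|g IHg h IHh|n g IH] e He //=.
- by rewrite (IH e He).
- by rewrite (IHg e He) (IHh e He).
- have Hu x : D x -> forall m, D (upd e n x m).
    by move=> Dx m; rewrite /upd; case: ifP.
  apply: (iff_trans _ (@elim_ok D D0 DD DS p Dp p0 e He n (qe g) (qf_qe g))).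
  split=> [[x [Dx hx]]|[x [Dx hx]]]; exists x; split => //.
    by rewrite -(IH _ (Hu x Dx)).
  by rewrite (IH _ (Hu x Dx)).
Qed.

Lemma qf_abs (D D' : G -> Prop) e f : qf f -> (vsat lt D e f <-> vsat lt D' e f).
Proof.
elim: f e => [s t|s t|g IH|g IHg h IHh|n g IH] e //= hq.
- by rewrite (IH e hq).
- by move/andP: hq => [hg hh]; rewrite (IHg e hg) (IHh e hh).
Qed.

Lemma elem_sub (S : G -> Prop) (S0 : S 0)
  (SD : forall a b, S a -> S b -> S (a + b)) (SS : forall (c : C) a, S a -> S (c *: a))
  p (Sp : S p) (p0 : p <> 0) : elem_substructure lt S.
Proof.
split => // f e He.
rewrite (@qe_ok S S0 SD SS p Sp p0 f e He).
rewrite (@qe_ok (fun _ => True) I (fun _ _ _ _ => I) (fun _ _ _ => I) p I p0 f e (fun _ => I)).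
exact: qf_abs (qf_qe f).
Qed.

End Ord.

Section Main.
Variable C : realFieldType.
Variable G : lmodType C.
Variables (lt0 lt1 : G -> G -> Prop) (v : G -> option G).
Hypothesis Hm : ham_model lt0 lt1 v.

Lemma o0 : ordered_vs lt0. Proof. by case: Hm => [[[h _ _ _ _] _] _ _]. Qed.
Lemma vNone x : v x = None <-> x = 0. Proof. by case: Hm => [[[_ _ h _ _] _] _ _]. Qed.
Lemma vultra x y : ext_le lt0 (v x) (v (x + y)) \/ ext_le lt0 (v y) (v (x + y)).
Proof. by case: Hm => [[[_ _ _ h _] _] _ _]. Qed.
Lemma vscal (c : C) x : c != 0 -> v (c *: x) = v x.
Proof. by case: Hm => [[[_ _ _ _ h] _] _ _]; apply: h. Qed.
Lemma videm x : ext_v v (v x) = v x. Proof. by case: Hm => [[_ [_ h _]] _ _]. Qed.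
Lemma vdense : dense_val lt0 v. Proof. by case: Hm. Qed.

Lemma vN x : v (- x) = v x.
Proof. by rewrite -scaleN1r vscal // oppr_eq0 oner_eq0. Qed.

Lemma vmin a b p q : v a = Some p -> v b = Some q -> lt0 p q -> v (a + b) = Some p.
Proof.
move=> ha hb hpq.
have Hl := o0.
have h2 := vultra (a + b) (- b); rewrite addrK vN ha hb in h2.
move: h2; case E: (v (a + b)) => [w|] h2.
  have hwp : lt0 w p \/ w = p.
    case: h2; rewrite /ext_le /=; first by case=> [h|[->]]; [left|right].
    case=> [h|[e]]; exfalso; [exact: (lt_asym Hl h hpq) | rewrite e in hpq; exact: (lt_irr Hl hpq)].
  have h1 := vultra a b; rewrite ha hb E /ext_le /= in h1.
  case: hwp => [hwp|->] //; exfalso.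
  case: h1 => [[h|[e]]|[h|[e]]].
  - exact: (lt_asym Hl h hwp).
  - by rewrite e in hwp; exact: (lt_irr Hl hwp).
  - exact: (lt_asym Hl (lt_trans Hl hpq h) hwp).
  - by rewrite e in hpq; exact: (lt_asym Hl hpq hwp).
case: h2 => [[//|//]|[h|[e]]]; [case: (lt_asym Hl h hpq) | rewrite e in hpq; case: (lt_irr Hl hpq)].
Qed.

Lemma key (s : seq G) : uniq s -> (forall x, x \in s -> v x = Some x) ->
  forall c : 'I_(size s) -> C, (forall i, c i = 0) \/
    exists i, c i != 0 /\ v (\sum_(i < size s) c i *: s`_i) = Some s`_i.
Proof.
elim: s => [|x s IH] /=; first by move=> _ _ c; left; case.
move=> /andP [xs us] Hs c.
have Hs' : forall y, y \in s -> v y = Some y by move=> y ys; apply: Hs; rewrite in_cons ys orbT.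
have vx : v x = Some x by apply: Hs; rewrite in_cons eqxx.
rewrite big_ord_recl /=.
have E : \sum_(i < size s) c (lift ord0 i) *: (x :: s)`_(lift ord0 i)
       = \sum_(i < size s) c (lift ord0 i) *: s`_i.
  by apply: eq_bigr => i _; rewrite lift0.
rewrite E.
case: (IH us Hs' (fun i => c (lift ord0 i))) => [H0|[j [cj vj]]].
  rewrite big1 ?addr0; last by move=> i _; rewrite H0 scale0r.
  case: (eqVneq (c ord0) 0) => c0.
    left => i; case: (unliftP ord0 i) => [j ->|->] //.
  by right; exists ord0; split => //; rewrite vscal.
case: (eqVneq (c ord0) 0) => c0.
  by right; exists (lift ord0 j); split => //; rewrite c0 scale0r add0r vj lift0.
have ne : x <> s`_j.
  by move=> e; move: xs; rewrite e mem_nth.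
have vc : v (c ord0 *: x) = Some x by rewrite vscal.
case: (lt_tot o0 ne) => h.
  by right; exists ord0; split => //; rewrite (vmin vc vj h).
right; exists (lift ord0 j); split => //.
by rewrite addrC (vmin vj vc h) lift0.
Qed.

End Main.

Theorem corollary6p1 (C : realFieldType) (G : lmodType C)
    (lt0 lt1 : G -> G -> Prop) (v : G -> option G) :
  ham_model lt0 lt1 v ->
  (exists x : G, x <> 0) ->
  (exists H : G -> Prop,
      [/\ ham_definable lt0 lt1 v (in_G H), lin_indep H & dense_in lt0 H]) /\
  (exists S : G -> Prop,
      [/\ ham_definable lt0 lt1 v (in_G S), (exists x : G, ~ S x)
        & elem_substructure lt0 S]).
Proof.
move=> Hm [y y0].
have Hl := o0 Hm.
split.
  exists (fun h => v h = Some h); split.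
  - exists (HAnd (HEq (HVal (HVar C 0)) (HVar C 0)) (HNot (HEq (HVar C 0) (HInf C)))).
    exists (fun _ => None) => a.
    rewrite /= /upd /=; case: a => [h|] /=; split.
    + by move=> e; split.
    + by case.
    + by [].
    + by case=> _ [].
  - move=> s c us Hs hsum i.
    case: (key Hm us Hs c) => [|[j [_ vj]]]; first by apply.
    by move: vj; rewrite hsum; move/(proj2 (vNone Hm 0)): (erefl (0 : G)) => ->.
  - move=> a b hab; have [c [h1 h2]] := vdense Hm hab.
    move: h1 h2; case E: (v c) => [h|] //= h1 h2.
    exists h; split => //; have := videm Hm c; by rewrite E.
have [h0 vy] : exists h0, v y = Some h0.
  by case E: (v y) => [h|]; [exists h | move/(vNone Hm): E].
have [q [q0 hq]] : exists q, q <> 0 /\ lt0 0 q.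
  case: (P_tri Hl y) => [//|[h|h]]; first by exists y.
  by exists (- y); split => //; move/eqP; rewrite oppr_eq0; move/eqP.
pose S x := ext_le lt0 (Some h0) (v x).
have S0 : S 0 by rewrite /S (proj2 (vNone Hm 0) erefl); left.
have ext_trans : forall a b c, ext_le lt0 a b -> ext_le lt0 b c -> ext_le lt0 a c.
  move=> a b c [h1|->] [h2|<-]; try by [left | right].
  left; move: h1 h2; case: a => [a|] //; case: b => [b|] //; case: c => [c|] //=.
  by move=> h1 h2; apply: (lt_trans Hl h1 h2).
exists S; split.
- exists (HAnd (HNot (HLt0 (HVal (HVar C 0)) (HVar C 1))) (HNot (HEq (HVar C 0) (HInf C)))).
  exists (fun m => if m == 1%N then Some h0 else None) => a.
  rewrite /= /upd /=; case: a => [x|] /=; last by split => // [[_ []]].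
  rewrite /S; split.
    move=> h; split => // h'.
    case: (v x) h h' => [w|] //=; rewrite /ext_le /=.
    case=> [h|[<-]] h'. exact: (lt_asym Hl h h'). exact: (lt_irr Hl h').
  move=> [h _]; case: (v x) h => [w|] /=; last by left.
  move=> h; rewrite /ext_le /=.
  case: (classic (w = h0)) => [->|ne]; first by right.
  by case: (lt_tot Hl ne) => // h'; left.
- have hlt : lt0 (h0 - q) h0.
    by apply/(lt_sub Hl); rewrite opprB addrC subrK.
  have [c [h1 h2]] := vdense Hm hlt.
  exists c; rewrite /S; move: h1 h2; case: (v c) => [w|] //= h1 h2.
  rewrite /ext_le /=; case=> [h|[e]]; [exact: (lt_asym Hl h h2) | rewrite e in h2; exact: (lt_irr Hl h2)].
- apply: (elem_sub Hl S0 _ _ (p := y)) => //.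
  + move=> a b Sa Sb; case: (vultra Hm a b) => h; [exact: ext_trans Sa h | exact: ext_trans Sb h].
  + move=> c a Sa; case: (eqVneq c 0) => [->|c0]; first by rewrite scale0r.
    by rewrite /S (vscal Hm).
  + by rewrite /S vy; right.
Qed.
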